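(* Let $n$ be the number of categories and $\epsilon\in(0,1)$. Let $\widehat{P}$ be an empirical distribution of $p$ samples and $\widehat{Q}$ an empirical distribution of $p'$ samples, both over the same $n$ categories. Let $$\bar{\mathcal{Q}}=\left\{Q\in\mathbb{S}^n:\ D(\widehat{Q}\,\|\,Q)\le\frac{1}{p'}\log\left(\frac1\epsilon\right)+\frac{2n}{p'}\log(p'+1)\right\},$$ and let $D^*_0=\min_{Q\in\bar{\mathcal{Q}}}D(\widehat{P}\,\|\,Q)$. If $$D^*_0\ \ge\ \frac1p\log\left(\frac1\epsilon\right)+\frac{2n}{p}\log(p+1),$$ then there is no distribution $Q$ on the $n$ categories such that simultaneously (1) $\widehat{Q}$ is typical at significance level $\epsilon$ with respect to $\{Q\}$ (as an empirical distribution of $p'$ samples), and (2) $\widehat{P}$ is typical at significance level $\epsilon$ with respect to $\{Q\}$ (as an empirical distribution of $p$ samples).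
   Context: $\mathbb{S}^n$ is the probability simplex in $\mathbb{R}^n$, and $D(P\|Q)=\sum_iP_i\log(P_i/Q_i)$ is the Kullback–Leibler divergence. An empirical distribution of $m$ samples over $n$ categories is a vector $\frac1m(m_1,\dots,m_n)$ with nonnegative integers $m_i$ summing to $m$. For a distribution $Q$ and a set $\mathcal{S}$ of empirical distributions of $m$ samples, $\mathbb{P}_Q(\mathcal{S})$ is the probability that $m$ i.i.d. draws from $Q$ have empirical distribution in $\mathcal{S}$. Typical: let $\widehat{P}^1,\widehat{P}^2,\dots$ be an ordering of all empirical distributions of $m$ samples over the $n$ categories with $\mathbb{P}_Q(\widehat{P}^1)\le\mathbb{P}_Q(\widehat{P}^2)\le\cdots$; an empirical distribution $\widehat{P}^\ell$ is typical at significance level $\epsilon$ with respect to a set $\mathcal{Q}$ of distributions iff $\sup_{Q\in\mathcal{Q}}\mathbb{P}_Q(\{\widehat{P}^1,\dots,\widehat{P}^\ell\})\ge\epsilon$ for any such ordering (the ordering depending on $Q$). *)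

(* Defs.v *)
From HB Require Import structures.
From mathcomp Require Import all_boot all_order all_algebra.
From mathcomp Require Import all_classical all_reals.
From mathcomp Require Import ereal exp.
Set Implicit Arguments. Unset Strict Implicit. Unset Printing Implicit Defensive.
Import Order.TTheory GRing.Theory Num.Theory.
Local Open Scope ring_scope.
Local Open Scope classical_set_scope.

Section Defs.
Variable R : realType.
Variable n : nat.

Definition simplex : set ('I_n -> R) :=
  [set Q | (forall i, 0 <= Q i) /\ \sum_(i < n) Q i = 1].

Definition KL (P Q : 'I_n -> R) : \bar R :=
  if [forall i, (P i != 0) ==> (Q i != 0)]
  then (\sum_(i < n) (if P i == 0 then 0 else P i * ln (P i / Q i)))%:E
  else +oo%E.

(* An empirical distribution of m samples is given by its count vector c
   (entries in 'I_m.+1, summing to m); its value is c / m. *)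
Definition emp (m : nat) (c : {ffun 'I_n -> 'I_m.+1}) : 'I_n -> R :=
  fun i => (c i : nat)%:R / m%:R.

Definition types (m : nat) : seq {ffun 'I_n -> 'I_m.+1} :=
  enum [set c : {ffun 'I_n -> 'I_m.+1} | \sum_(i < n) (c i : nat) == m]%SET.

Definition probT (m : nat) (Q : 'I_n -> R) (c : {ffun 'I_n -> 'I_m.+1}) : R :=
  \sum_(s : {ffun 'I_m -> 'I_n} |
         [forall i, #|[set j | s j == i]%SET| == (c i : nat)])
     \prod_(j < m) Q (s j).

Definition is_ordering (m : nat) (Q : 'I_n -> R) (s : seq {ffun 'I_n -> 'I_m.+1}) :=
  perm_eq s (types m) /\ sorted (fun a b => probT Q a <= probT Q b) s.

Definition prefix_prob (m : nat) (Q : 'I_n -> R) (s : seq {ffun 'I_n -> 'I_m.+1})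
  (c : {ffun 'I_n -> 'I_m.+1}) : R :=
  \sum_(c' <- take (index c s).+1 s) probT Q c'.

Definition typical (m : nat) (eps : R) (Qs : set ('I_n -> R))
  (c : {ffun 'I_n -> 'I_m.+1}) : Prop :=
  forall ord : ('I_n -> R) -> seq {ffun 'I_n -> 'I_m.+1},
    (forall Q, Qs Q -> is_ordering Q (ord Q)) ->
    eps <= sup [set prefix_prob Q (ord Q) c | Q in Qs].

End Defs.

Arguments simplex {R n}.
Arguments KL {R n}.
Arguments emp {R n m}.
Arguments typical {R n} m.

(* Main.v *)
Require Import Defs.
From HB Require Import structures.
From mathcomp Require Import all_boot all_order all_algebra.
From mathcomp Require Import all_classical all_reals.
From mathcomp Require Import ereal exp sequences.
From mathcomp Require Import lra.
Import Order.TTheory GRing.Theory Num.Theory.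
Set Implicit Arguments. Unset Strict Implicit. Unset Printing Implicit Defensive.
Local Open Scope ring_scope.
Local Open Scope classical_set_scope.

Section H.
Variable R : realType.
Variable n : nat.

Lemma prod_counts m (Q : 'I_n -> R) (s : {ffun 'I_m -> 'I_n}) :
  \prod_(j < m) Q (s j) = \prod_(i < n) Q i ^+ #|[set j | s j == i]%SET|.
Proof.
rewrite (partition_big s predT) //=; apply: eq_bigr => i _.
rewrite (eq_bigr (fun=> Q i)); last by move=> j /eqP->.
by rewrite -prodr_const; apply: eq_bigl => j; rewrite inE.
Qed.

Definition Sc (m : nat) (c : {ffun 'I_n -> 'I_m.+1}) :=
  [set s : {ffun 'I_m -> 'I_n} | [forall i, #|[set j | s j == i]%SET| == (c i : nat)]]%SET.

Lemma probT_eq (m : nat) (Q : 'I_n -> R) (c : {ffun 'I_n -> 'I_m.+1}) :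
  probT Q c = #|Sc c|%:R * \prod_(i < n) Q i ^+ (c i : nat).
Proof.
rewrite /probT (eq_bigr (fun=> \prod_(i < n) Q i ^+ (c i : nat))); last first.
  move=> s /forallP H; rewrite prod_counts; apply: eq_bigr => i _.
  by rewrite (eqP (H i)).
rewrite (eq_bigl (fun s => s \in Sc c)); last by move=> s; rewrite inE.
by rewrite sumr_const mulr_natl.
Qed.

Lemma probT_ge0 (m : nat) (Q : 'I_n -> R) (c : {ffun 'I_n -> 'I_m.+1}) : (forall i, 0 <= Q i) -> 0 <= probT Q c.
Proof.
move=> HQ; rewrite probT_eq mulr_ge0 // prodr_ge0 // => i _; exact: exprn_ge0.
Qed.

Lemma probT_le_total m (Q : 'I_n -> R) (c : {ffun 'I_n -> 'I_m.+1}) :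
  (forall i, 0 <= Q i) -> probT Q c <= (\sum_i Q i) ^+ m.
Proof.
move=> HQ; rewrite /probT.
have -> : (\sum_i Q i) ^+ m = \prod_(j < m) \sum_i Q i by rewrite prodr_const card_ord.
rewrite bigA_distr_bigA /= [leRHS](bigID (fun s : {ffun 'I_m -> 'I_n} =>
   [forall i, #|[set j | s j == i]%SET| == (c i : nat)])) /= lerDl.
by apply: sumr_ge0 => s _; apply: prodr_ge0.
Qed.

Lemma emp_sum m (c : {ffun 'I_n -> 'I_m.+1}) : (0 < m)%N ->
  (\sum_(i < n) (c i : nat))%N = m -> \sum_i emp c i = 1 :> R.
Proof.
move=> m0 Hs; rewrite /emp -mulr_suml -natr_sum Hs divff //.
by rewrite pnatr_eq0 -lt0n.
Qed.


Lemma sum_le_seq (T : Type) (t : seq T) (F : T -> R) a :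
  (forall k, (k < size t)%N -> forall x0, F (nth x0 t k) <= a) ->
  \sum_(x <- t) F x <= (size t)%:R * a.
Proof.
elim: t => [|x t IH] H; first by rewrite big_nil mul0r.
rewrite big_cons /= -add1n natrD mulrDl mul1r lerD //.
  exact: (H 0%N _ x).
by apply: IH => k Hk x0; apply: (H k.+1).
Qed.

Lemma prefix_le (m : nat) (Q : 'I_n -> R) s (c : {ffun 'I_n -> 'I_m.+1}) :
  (forall i, 0 <= Q i) ->
  is_ordering Q s -> c \in s -> prefix_prob Q s c <= (size s)%:R * probT Q c.
Proof.
move=> HQ [_ Hs] cs; rewrite /prefix_prob.
apply: le_trans (sum_le_seq (a := probT Q c) _) _.
  move=> k Hk x0.
  have Hk' : (k < (index c s).+1)%N /\ (k < size s)%N.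
    by rewrite size_take_min leq_min in Hk; case/andP: Hk.
  rewrite nth_take; last by case: Hk'.
  rewrite -[X in _ <= probT Q X](nth_index x0 cs).
  apply: (sorted_leq_nth (leT := fun a b => probT Q a <= probT Q b)) => //.
  - by move=> a b d /= h1 h2; apply: le_trans h1 h2.
  - by case: Hk'.
  - by rewrite inE index_mem.
  - by case: Hk'; rewrite ltnS.
apply: ler_wpM2r; first exact: probT_ge0.
by rewrite ler_nat size_take_min geq_minr.
Qed.

Definition ordS (m : nat) (Q : 'I_n -> R) : seq {ffun 'I_n -> 'I_m.+1} :=
  sort (fun a b => probT Q a <= probT Q b) (types n m).

Lemma ordS_ok (m : nat) (Q : 'I_n -> R) : is_ordering Q (ordS m Q).
Proof.
split; first by rewrite /ordS perm_sort perm_refl.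
by apply: sort_sorted => a b; exact: le_total.
Qed.


Lemma size_types (m : nat) : (size (types n m) <= (m.+1) ^ n)%N.
Proof.
rewrite /types -cardE; apply: leq_trans (max_card _) _.
by rewrite card_ffun !card_ord.
Qed.

Lemma mem_types (m : nat) (c : {ffun 'I_n -> 'I_m.+1}) :
  (\sum_(i < n) (c i : nat))%N = m -> c \in types n m.
Proof. by move=> Hs; rewrite /types mem_enum inE Hs. Qed.

Lemma expr_expR (x : R) (k : nat) : (k != 0%N -> 0 < x) ->
  x ^+ k = expR (if k == 0%N then 0 else k%:R * ln x).
Proof.
case: eqP => [->|/eqP k0 H]; first by rewrite expr0 expR0.
by rewrite expRM_natl lnK // posrE H.
Qed.

Lemma typ_bound (m : nat) (Q : 'I_n -> R) (c : {ffun 'I_n -> 'I_m.+1}) eps :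
  0 < eps -> simplex Q -> (0 < m)%N -> (\sum_(i < n) (c i : nat))%N = m ->
  typical m eps [set Q] c ->
  (KL (emp c) Q <= ((m%:R)^-1 * ln (eps^-1) + n%:R / m%:R * ln (m%:R + 1))%:E)%E.
Proof.
move=> e0 [HQ0 HQ1] m0 Hs Ht.
have He : eps <= prefix_prob Q (ordS m Q) c.
  have := Ht (fun Q => ordS m Q) (fun Q' _ => ordS_ok m Q').
  by rewrite image_set1 sup1.
have HN : eps <= ((m.+1) ^ n)%:R * probT Q c.
  apply: (le_trans He); apply: le_trans (prefix_le HQ0 (ordS_ok m Q) _) _.
    by rewrite /ordS mem_sort; apply: mem_types.
  apply: ler_wpM2r; first exact: probT_ge0.
  by rewrite ler_nat /ordS size_sort size_types.
have m0R : 0 < m%:R :> R by rewrite ltr0n.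
have empE : forall i : 'I_n, (emp c i == 0 :> R) = ((c i : nat) == 0%N).
  by move=> i; rewrite /emp mulf_eq0 invr_eq0 !pnatr_eq0 (negbTE (lt0n_neq0 m0)) orbF.
have emp_ge0 : forall i : 'I_n, 0 <= emp c i :> R by move=> i; rewrite /emp divr_ge0.
rewrite /KL; case: ifP => [/forallP Hf|Hnf]; last first.
  exfalso; move/negbT/forallPn: Hnf => [i]; rewrite negb_imply => /andP[h1 /negPn h2].
  move: HN; rewrite probT_eq (bigD1 i) //= (eqP h2) expr0n.
  by rewrite empE in h1; rewrite (negbTE h1) mul0r mulr0 mulr0 leNgt e0.
rewrite lee_fin.
set SQ := \sum_(i < n) (if (c i : nat) == 0%N then 0 else (c i : nat)%:R * ln (Q i)).
set SA := \sum_(i < n) (if (c i : nat) == 0%N then 0 else (c i : nat)%:R * ln (emp c i : R)).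
have HQpos : forall i, (c i : nat) != 0%N -> 0 < Q i.
  move=> i ci; rewrite lt_def HQ0 andbT; apply: (implyP (Hf i)).
  by rewrite empE.
have HApos : forall i : 'I_n, (c i : nat) != 0%N -> 0 < (emp c i : R).
  by move=> i ci; rewrite lt_def emp_ge0 andbT empE.
have PQE : \prod_(i < n) Q i ^+ (c i : nat) = expR SQ.
  rewrite expR_sum; apply: eq_bigr => i _; apply: expr_expR; exact: HQpos.
have PAE : \prod_(i < n) (emp c i : R) ^+ (c i : nat) = expR SA.
  rewrite expR_sum; apply: eq_bigr => i _; apply: expr_expR; exact: HApos.
have HA : probT (emp c : 'I_n -> R) c <= 1.
  by apply: le_trans (probT_le_total _ emp_ge0) _; rewrite emp_sum // expr1n.
move: HA; rewrite probT_eq PAE => HA.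
have HK : #|Sc c|%:R <= (expR SA)^-1 :> R.
  by rewrite -(ler_pM2r (expR_gt0 SA)) mulVf ?gt_eqF ?expR_gt0.
have HN2 : eps <= ((m.+1) ^ n)%:R * expR (SQ - SA).
  apply: (le_trans HN); rewrite probT_eq PQE expRB ler_wpM2l //.
  by rewrite mulrC ler_wpM2l ?expR_ge0.
have Hln : ln eps <= n%:R * ln (m%:R + 1) + (SQ - SA).
  have Np : 0 < ((m.+1) ^ n)%:R :> R by rewrite ltr0n expn_gt0.
  rewrite -(ler_ln (x := eps)) ?posrE ?mulr_gt0 ?expR_gt0 // in HN2.
  rewrite lnM ?posrE ?expR_gt0 // expRK natrX lnXn -?natr1 ?ltr0n // in HN2. by rewrite mulr_natl.
have KLE : m%:R * \sum_(i < n)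
    (if (emp c i : R) == 0 then 0 else (emp c i : R) * ln ((emp c i : R) / Q i)) = SA - SQ.
  rewrite mulr_sumr /SA /SQ -sumrB; apply: eq_bigr => i _.
  rewrite empE; case: eqP => [_|/eqP ci]; first by rewrite mulr0 subr0.
  rewrite ln_div ?posrE ?HApos ?HQpos // mulrA mulrBr; congr (_ * _ - _ * _).
  1-2: by rewrite /emp mulrC divfK // gt_eqF.
rewrite -(ler_pM2l m0R) KLE mulrDr mulrA mulfV ?gt_eqF // mul1r mulrA.
rewrite (mulrC m%:R) divfK ?gt_eqF // lnV ?posrE //.
lra.
Qed.

End H.

Theorem proposition2 (R : realType) (n p p' : nat) (eps : R)
  (cP : {ffun 'I_n -> 'I_p.+1}) (cQ : {ffun 'I_n -> 'I_p'.+1}) :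
  0 < eps < 1 ->
  (0 < p)%N -> (0 < p')%N ->
  (\sum_(i < n) (cP i : nat) = p)%N ->
  (\sum_(i < n) (cQ i : nat) = p')%N ->
  (((p%:R)^-1 * ln (eps^-1) + (2 * n)%:R / p%:R * ln (p%:R + 1))%:E
     <= ereal_inf [set KL (emp cP) Q | Q in
          [set Q : 'I_n -> R | simplex Q /\
             (KL (emp cQ) Q <=
               ((p'%:R)^-1 * ln (eps^-1) + (2 * n)%:R / p'%:R * ln (p'%:R + 1))%:E)%E]])%E ->
  ~ (exists Q : 'I_n -> R, simplex Q /\
       typical p' eps [set Q] cQ /\ typical p eps [set Q] cP).
Proof.
move=> /andP[e0 e1] p0 p'0 HsP HsQ Hinf [Q [HQs [HtQ HtP]]].
have n0 : (0 < n)%N.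
  case: (posnP n) => // n0; move: HsP; rewrite big1 => [h|i _]; first by rewrite -h in p0.
  by have := ltn_ord i; rewrite {2}n0.
have hQ := typ_bound e0 HQs p'0 HsQ HtQ.
have hP := typ_bound e0 HQs p0 HsP HtP.
have Hmono : forall m : nat, (0 < m)%N ->
    (m%:R^-1 * ln (eps^-1) + n%:R / m%:R * ln (m%:R + 1) <
     m%:R^-1 * ln (eps^-1) + (2 * n)%:R / m%:R * ln (m%:R + 1) :> R).
  move=> m m0; rewrite ltrD2l ltr_pM2r; last by apply: ln_gt0; rewrite ltrDr ltr0n.
  by rewrite ltr_pM2r ?invr_gt0 ?ltr0n // ltr_nat -{1}(mul1n n) ltn_pmul2r.
have Qin : [set Q : 'I_n -> R | simplex Q /\
             (KL (emp cQ) Q <=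
               ((p'%:R)^-1 * ln (eps^-1) + (2 * n)%:R / p'%:R * ln (p'%:R + 1))%:E)%E] Q.
  split => //; apply: (le_trans hQ); rewrite lee_fin; apply: ltW; exact: Hmono.
have Hlb : (ereal_inf [set KL (emp cP) Q | Q in
          [set Q : 'I_n -> R | simplex Q /\
             (KL (emp cQ) Q <=
               ((p'%:R)^-1 * ln (eps^-1) + (2 * n)%:R / p'%:R * ln (p'%:R + 1))%:E)%E]]
          <= KL (emp cP) Q)%E.
  by apply: ereal_inf_lbound; exists Q.
have := le_trans Hinf (le_trans Hlb hP); rewrite lee_fin.
by rewrite leNgt (Hmono p p0).
Qed.
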